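(* For every integer $n\ge 2$ and every real number $p\in(0,1)$, \[ \bigl(n^p-(n-1)^p\bigr)^{1/(1-p)}+3^{-p/(1-p)}\bigl((n-2)n^p-(n-3)(n-1)^p\bigr)^{1/(1-p)}\le (n-1)^{p/(1-p)}. \] *)

(* Defs.v *)
(* concrete reals R, real powers via Rpower (x^y = exp (y ln x), used only for x > 0). *)
From Stdlib Require Export Reals.

(* Main.v *)
Require Import Defs.
From Stdlib Require Import Reals Lra.
Open Scope R_scope.

Lemma Rpower_pos x y : 0 < Rpower x y.
Proof. unfold Rpower; apply exp_pos. Qed.

Lemma Rpower_1_base y : Rpower 1 y = 1.
Proof. unfold Rpower; rewrite ln_1, Rmult_0_r; apply exp_0. Qed.

Lemma ln3_ge1 : 1 <= ln 3.
Proof.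
  destruct (Rle_or_lt 1 (ln 3)) as [h|h]; auto.
  apply exp_increasing in h. rewrite exp_ln in h by lra.
  pose proof exp_le_3. lra.
Qed.

Lemma L1 m p : 1 <= m -> 0 < p < 1 ->
  0 < Rpower (m+1) p - Rpower m p <= p * Rpower m (p-1).
Proof.
  intros hm hp.
  destruct (MVT_cor2 (fun x => Rpower x p) (fun x => p * Rpower x (p-1)) m (m+1))
    as [c [hc1 hc2]]; [lra| |].
  { intros c hc. apply derivable_pt_lim_power. lra. }
  rewrite hc1. replace (m+1-m) with 1 by ring. rewrite Rmult_1_r.
  split. { apply Rmult_lt_0_compat; [lra|apply Rpower_pos]. }
  apply Rmult_le_compat_l; [lra|].
  replace (p-1) with (-(1-p)) by ring. rewrite !Rpower_Ropp.
  apply Rinv_le_contravar; [apply Rpower_pos|].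
  apply Rle_Rpower_l; lra.
Qed.

Lemma LA p : 0 < p < 1 ->
  Rpower p (1/(1-p)) + Rpower 3 (-(p/(1-p))) <= 1.
Proof.
  intros hp. set (s := p/(1-p)).
  assert (hs : p <= s).
  { unfold s. apply Rmult_le_reg_r with (1-p); [lra|].
    unfold Rdiv. rewrite Rmult_assoc, Rinv_l by lra. nra. }
  replace (1/(1-p)) with (1 + s) by (unfold s; field; lra).
  rewrite Rpower_plus, Rpower_1 by lra.
  assert (h1 : Rpower p s <= / (1+p)).
  { unfold Rpower.
    assert (s * ln p <= - p).
    { pose proof (exp_ineq1_le (ln p)). rewrite exp_ln in H by lra.
      replace (-p) with (s*(p-1)) by (unfold s; field; lra).
      apply Rmult_le_compat_l; [lra|]. lra. }
    apply Rle_trans with (exp (-p)).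
    { destruct H as [H|H]; [left; apply exp_increasing; auto|rewrite H; lra]. }
    rewrite exp_Ropp. apply Rinv_le_contravar; [lra|].
    pose proof (exp_ineq1_le p). lra. }
  assert (h2 : Rpower 3 (-s) <= / (1+p)).
  { rewrite Rpower_Ropp. apply Rinv_le_contravar; [lra|].
    unfold Rpower. pose proof (exp_ineq1_le (s * ln 3)). pose proof ln3_ge1. nra. }
  assert (p * / (1+p) + / (1+p) = 1) by (field; lra).
  assert (0 <= p) by lra. nra.
Qed.

Lemma LB p : 0 < p < 1 ->
  Rpower 3 (-(p/(1-p))) * Rpower (1+p) (1/(1-p)) <= 1.
Proof.
  intros hp. unfold Rpower. rewrite <- exp_plus.
  apply Rle_trans with (exp 0); [|rewrite exp_0; lra].
  assert (ln (1+p) <= p) by (pose proof (exp_ineq1_le (ln (1+p))); rewrite exp_ln in H; lra).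
  pose proof ln3_ge1.
  assert (1/(1-p) * ln (1+p) <= p/(1-p) * ln 3).
  { apply Rle_trans with (1/(1-p) * p).
    - apply Rmult_le_compat_l; [|lra]. apply Rlt_le; apply Rdiv_lt_0_compat; lra.
    - replace (1/(1-p)*p) with (p/(1-p) * 1) by (field; lra).
      apply Rmult_le_compat_l; [|lra]. apply Rlt_le; apply Rdiv_lt_0_compat; lra. }
  assert (hh : -(p/(1-p))*ln 3 + 1/(1-p)*ln(1+p) <= 0) by lra.
  destruct hh as [hh|hh]; [left; apply exp_increasing; auto|rewrite hh; lra].
Qed.

Lemma deriv_lin_pow a b q c : 0 < c*a - b ->
  derivable_pt_lim (fun x => Rpower (x*a - b) q) c (q * Rpower (c*a-b) (q-1) * a).
Proof.
  intros h.
  assert (h1 : derivable_pt_lim (fun x => x*a - b) c (1*a-0)).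
  { apply (derivable_pt_lim_minus (fun x => x*a) (fun _ => b)).
    - apply (derivable_pt_lim_scal_right id). apply derivable_pt_lim_id.
    - apply derivable_pt_lim_const. }
  replace (1*a-0) with a in h1 by ring.
  pose proof (derivable_pt_lim_comp (fun x => x*a - b) (fun y => Rpower y q) c a
     (q * Rpower (c*a-b) (q-1)) h1 (derivable_pt_lim_power _ q h)) as H.
  exact H.
Qed.

Lemma L4 p m : 0 < p < 1 -> 1 <= m ->
  Rpower p (1/(1-p)) + Rpower 3 (-(p/(1-p))) * Rpower (m*(1+p) - p) (1/(1-p))
  <= Rpower m (1/(1-p)).
Proof.
  intros hp hm.
  set (q := 1/(1-p)). set (K := Rpower 3 (-(p/(1-p)))).
  pose proof (LA p hp) as hA. pose proof (LB p hp) as hB. fold q K in hA, hB.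
  assert (hq : 1 < q).
  { assert (q*(1-p) = 1) by (unfold q; field; lra). nra. }
  assert (hK : 0 < K) by apply Rpower_pos.
  set (f := fun x => Rpower x q - K * Rpower (x*(1+p)-p) q).
  assert (f1 : f 1 = 1 - K).
  { unfold f. replace (1*(1+p)-p) with 1 by ring. rewrite Rpower_1_base. ring. }
  assert (fm : 1 - K <= f m).
  { destruct hm as [hm|hm]; [|rewrite <- hm; lra].
    destruct (MVT_cor2 f (fun x => q * Rpower x (q-1) - K * (q * Rpower (x*(1+p)-p) (q-1) * (1+p))) 1 m)
      as [c [hc1 hc2]]; [lra| |].
    { intros c hc. unfold f. apply derivable_pt_lim_minus.
      - apply derivable_pt_lim_power; lra.
      - apply derivable_pt_lim_scal. apply deriv_lin_pow. nra. }
    rewrite <- f1.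
    enough (0 <= (q * Rpower c (q-1) - K * (q * Rpower (c*(1+p)-p) (q-1) * (1+p))) * (m-1)) by lra.
    apply Rmult_le_pos; [|lra].
    assert (Rpower (c*(1+p)-p) (q-1) <= Rpower c (q-1) * Rpower (1+p) (q-1)).
    { rewrite Rpower_mult_distr by lra. apply Rle_Rpower_l; nra. }
    assert (e : K * (1+p) * Rpower (1+p) (q-1) = K * Rpower (1+p) q).
    { replace q with (1 + (q-1)) at 2 by ring. rewrite Rpower_plus, Rpower_1 by lra. ring. }
    pose proof (Rpower_pos c (q-1)). pose proof (Rpower_pos (1+p) (q-1)).
    assert (q * Rpower c (q-1) * (K * (1+p) * Rpower (1+p) (q-1)) <= q * Rpower c (q-1)).
    { rewrite e. rewrite <- (Rmult_1_r (q * Rpower c (q-1))) at 2.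
      apply Rmult_le_compat_l; [|lra]. nra. }
    assert (K * (q * Rpower (c*(1+p)-p) (q-1) * (1+p)) <= q * Rpower c (q-1) * (K * (1+p) * Rpower (1+p) (q-1))).
    { replace (q * Rpower c (q-1) * (K * (1+p) * Rpower (1+p) (q-1))) with
        ((K*q*(1+p)) * (Rpower c (q-1) * Rpower (1+p) (q-1))) by ring.
      replace (K * (q * Rpower (c*(1+p)-p) (q-1) * (1+p))) with
        ((K*q*(1+p)) * Rpower (c*(1+p)-p) (q-1)) by ring.
      apply Rmult_le_compat_l; [|lra]. apply Rlt_le; repeat apply Rmult_lt_0_compat. all: try lra. apply Rinv_0_lt_compat; lra. }
    lra. }
  unfold f in fm. lra.
Qed.

Theorem lemma6 (n : nat) (p : R) (hn : (2 <= n)%nat) (hp0 : 0 < p) (hp1 : p < 1) :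
  Rpower (Rpower (INR n) p - Rpower (INR n - 1) p) (1 / (1 - p))
  + Rpower 3 (- p / (1 - p))
    * Rpower ((INR n - 2) * Rpower (INR n) p - (INR n - 3) * Rpower (INR n - 1) p) (1 / (1 - p))
  <= Rpower (INR n - 1) (p / (1 - p)).
Proof.
  assert (hN : 2 <= INR n) by (apply le_INR in hn; simpl in hn; lra).
  assert (hp : 0 < p < 1) by lra.
  set (m := INR n - 1).
  replace (INR n) with (m+1) by (unfold m; ring).
  assert (hm : 1 <= m) by (unfold m; lra).
  replace (m + 1 - 2) with (m - 1) by ring.
  replace (m + 1 - 3) with (m - 2) by ring.
  replace (-p/(1-p)) with (-(p/(1-p))) by (field; lra).
  set (q := 1/(1-p)).
  replace (p/(1-p)) with (q + -1) by (unfold q; field; lra).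
  set (K := Rpower 3 (-(q + -1))).
  pose proof (L1 m p hm hp) as [hx1 hx2].
  set (x := Rpower (m+1) p - Rpower m p) in *.
  set (b := Rpower m p).
  assert (hy : (m - 1) * Rpower (m + 1) p - (m - 2) * b = (m-1)*x + b) by (unfold x, b; ring).
  rewrite hy.
  assert (hb : b = Rpower m (p-1) * m).
  { unfold b. replace p with ((p-1)+1) at 1 by ring. rewrite Rpower_plus, Rpower_1 by lra. ring. }
  pose proof (Rpower_pos m (p-1)) as hmp.
  pose proof (Rpower_pos m p) as hbpos. fold b in hbpos.
  assert (hq : 1 < q) by (assert (q*(1-p) = 1) by (unfold q; field; lra); nra).
  assert (he : (p-1)*q = -1) by (unfold q; field; lra).
  assert (hinv : Rpower m (-1) = / m) by (replace (-1) with (-(1)) by ring; rewrite Rpower_Ropp, Rpower_1; lra).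
  assert (h1 : Rpower x q <= Rpower p q * / m).
  { apply Rle_trans with (Rpower (p * Rpower m (p-1)) q).
    - apply Rle_Rpower_l; lra.
    - rewrite <- Rpower_mult_distr, Rpower_mult, he, hinv by lra. lra. }
  assert (h2 : Rpower ((m-1)*x + b) q <= / m * Rpower (m*(1+p) - p) q).
  { apply Rle_trans with (Rpower (Rpower m (p-1) * (m*(1+p)-p)) q).
    - apply Rle_Rpower_l; [lra|]. split; [nra|].
      rewrite hb. nra.
    - rewrite <- Rpower_mult_distr, Rpower_mult, he, hinv by nra. lra. }
  assert (h3 : Rpower m (q + -1) = Rpower m q * / m) by (rewrite Rpower_plus, hinv; ring).
  rewrite h3.
  pose proof (L4 p m hp hm) as h4. fold q in h4.
  replace (Rpower 3 (- (p / (1 - p)))) with K in h4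
    by (unfold K; f_equal; unfold q; field; lra).
  assert (hK : 0 < K) by apply Rpower_pos.
  assert (0 < / m) by (apply Rinv_0_lt_compat; lra).
  apply Rle_trans with ((Rpower p q + K * Rpower (m*(1+p)-p) q) * / m).
  - rewrite Rmult_plus_distr_r.
    apply Rplus_le_compat; [lra|]. 
    replace (K * Rpower (m * (1 + p) - p) q * / m) with (K * (/ m * Rpower (m * (1 + p) - p) q)) by ring.
    apply Rmult_le_compat_l; lra.
  - apply Rmult_le_compat_r; lra.
Qed.
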